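(* For every positive integer $n$, $$\sum_{k=0}^{n-1}\frac{q^{-k(k-1)/2}}{\genfrac{[}{]}{0pt}{}{n}{k}_q}=\frac{(q^2;q)_n}{(q^2;q^2)_n}\sum_{i=0}^{n-1}\frac{C(i)\,(q^2;q^2)_i}{(q^2;q)_i\,(q^{i+2}-1)},$$ where $$C(i)=\frac{q^{i+1}+q^{3(i+1)}+q^{-i(i-1)/2}+q^{-(i+1)(i-4)/2}-q^{(2+3i-i^2)/2}-q^{-(i+1)(i-2)/2}-2q^{2(i+1)}}{q^{i+1}-1}.$$ (The identity is an identity of rational functions in the indeterminate $q$.)
   Context: For an indeterminate $q$ and any $a$, $(a;q)_n=(1-a)(1-aq)\cdots(1-aq^{n-1})$, with $(a;q)_0=1$. The $q$-binomial coefficient is $\genfrac{[}{]}{0pt}{}{n}{k}_q=\frac{(q;q)_n}{(q;q)_k\,(q;q)_{n-k}}$ for $0\le k\le n$. *)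

(* Defs.v *)
From HB Require Import structures.
From mathcomp Require Import all_boot all_order all_algebra.
From mathcomp Require Import fraction.
Set Implicit Arguments. Unset Strict Implicit. Unset Printing Implicit Defensive.
Import Order.TTheory GRing.Theory Num.Theory.
Local Open Scope ring_scope.

Definition RF := {fraction {poly rat}}.
Definition qx : RF := @tofrac _ ('X : {poly rat}).

Definition qpoch (F : fieldType) (a q : F) (n : nat) : F :=
  \prod_(j < n) (1 - a * q ^+ j).

Definition qbinom (F : fieldType) (q : F) (n k : nat) : F :=
  qpoch q q n / (qpoch q q k * qpoch q q (n - k)).

Definition qz (z : int) : RF := qx ^ z.

(* C(i); all the exponents below are exact integer halves *)
Definition Cf (i : nat) : RF :=
  let iz : int := i%:Z in
  (qz (iz + 1) + qz (3 * (iz + 1)) + qz (- ((iz * (iz - 1)) %/ 2)%Z)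
   + qz (- (((iz + 1) * (iz - 4)) %/ 2)%Z)
   - qz (((2 + 3 * iz - iz ^+ 2) %/ 2)%Z)
   - qz (- (((iz + 1) * (iz - 2)) %/ 2)%Z)
   - 2 * qz (2 * (iz + 1)))
  / (qz (iz + 1) - 1).

(* Main.v *)
Require Import Defs.
From HB Require Import structures.
From mathcomp Require Import all_boot all_order all_algebra.
From mathcomp Require Import fraction.
From mathcomp Require Import ring zify.
Import Order.TTheory GRing.Theory Num.Theory.
Local Open Scope ring_scope.

Lemma qx_neq0 : qx != 0.
Proof.
rewrite /qx tofrac_eq0; apply/eqP => h.
by have := congr1 (fun p : {poly rat} => p`_1) h; rewrite coefX coef0.
Qed.

Lemma oneB_neq0 m : (0 < m)%N -> 1 - qx ^+ m != 0.
Proof.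
move=> m0; rewrite /qx -tofracXn -tofrac1 -tofracB tofrac_eq0; apply/eqP => h.
have := congr1 (fun p : {poly rat} => p.[0]) h.
by rewrite /= !hornerE expr0n -(prednK m0) /= subr0 => /eqP; rewrite oner_eq0.
Qed.

Lemma oneD_neq0 m : (0 < m)%N -> 1 + qx ^+ m != 0.
Proof.
move=> m0; rewrite /qx -tofracXn -tofrac1 -tofracD tofrac_eq0; apply/eqP => h.
have := congr1 (fun p : {poly rat} => p.[0]) h.
by rewrite /= !hornerE expr0n -(prednK m0) /= addr0 => /eqP; rewrite oner_eq0.
Qed.

Lemma qpochS (F : fieldType) (a q : F) n :
  qpoch a q n.+1 = qpoch a q n * (1 - a * q ^+ n).
Proof. by rewrite /qpoch big_ord_recr. Qed.

Lemma qpoch0 (F : fieldType) (a q : F) : qpoch a q 0 = 1.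
Proof. by rewrite /qpoch big_ord0. Qed.

Lemma qpoch_qq_neq0 n : qpoch qx qx n != 0.
Proof.
apply/prodf_neq0 => i _; rewrite -exprS; exact: oneB_neq0.
Qed.

Lemma qpoch_q2q_neq0 n : qpoch (qx ^+ 2) qx n != 0.
Proof.
apply/prodf_neq0 => i _; rewrite -exprD; exact: oneB_neq0.
Qed.

Lemma qpoch_q2q2_neq0 n : qpoch (qx ^+ 2) (qx ^+ 2) n != 0.
Proof.
apply/prodf_neq0 => i _; rewrite -exprM -exprD; exact: oneB_neq0.
Qed.

Definition W (k : nat) : RF := qz (- (((k%:Z) * (k%:Z - 1)) %/ 2)%Z).

Lemma even_tri (i : nat) : exists t : int, i%:Z * (i%:Z - 1) = t * 2.
Proof.
elim: i => [|i [t ht]]; first by exists 0.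
exists (t + i%:Z).
transitivity (i%:Z*(i%:Z-1) + i%:Z*2); first by rewrite -addn1 PoszD; ring.
by rewrite ht; ring.
Qed.

Lemma qzD a b : qz (a + b) = qz a * qz b.
Proof. by rewrite /qz expfzDr // qx_neq0. Qed.

Lemma qzN a : qz (- a) = (qz a)^-1.
Proof. by rewrite /qz invr_expz. Qed.

Lemma qzn (n : nat) : qz n = qx ^+ n.
Proof. by []. Qed.

Lemma W_tri i t : i%:Z * (i%:Z - 1) = t * 2 -> W i = qz (- t).
Proof. by move=> h; rewrite /W h mulzK. Qed.

Lemma W0 : W 0 = 1.
Proof. by rewrite (@W_tri 0 0). Qed.

Lemma WS k : W k.+1 = W k / qx ^+ k.
Proof.
have [t ht] := even_tri k.
rewrite (@W_tri _ _ ht) (@W_tri k.+1 (t + k%:Z)); last first.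
  transitivity (k%:Z*(k%:Z-1) + k%:Z*2); first by rewrite -addn1 PoszD; ring.
  by rewrite ht; ring.
by rewrite opprD qzD (qzN k%:Z) qzn.
Qed.

Lemma qz1 : qz 1 = qx.
Proof. by rewrite /qz expr1z. Qed.

Lemma Cf_eq i : Cf i =
  (qx * qx ^+ i + qx ^+ 3 * (qx ^+ i) ^+ 3 + W i + W i * qx ^+ i * qx ^+ 2
   - W i * qx ^+ i * qx - W i * qx - 2 * qx ^+ 2 * (qx ^+ i) ^+ 2)
  / (qx * qx ^+ i - 1).
Proof.
have [t ht] := even_tri i.
rewrite (@W_tri _ _ ht) /Cf /=.
set iz := Posz i.
rewrite ht mulzK //.
rewrite (_ : (iz + 1) * (iz - 4) = (t - iz - 2) * 2); last first.
  transitivity (iz * (iz - 1) - (iz + 2) * 2); first by ring.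
  by rewrite ht; ring.
rewrite (_ : 2 + 3 * iz - iz ^+ 2 = (- t + iz + 1) * 2); last first.
  transitivity (- (iz * (iz - 1)) + (iz + 1) * 2); first by ring.
  by rewrite ht; ring.
rewrite (_ : (iz + 1) * (iz - 2) = (t - 1) * 2); last first.
  transitivity (iz * (iz - 1) - 2); first by ring.
  by rewrite ht; ring.
rewrite !mulzK //.
rewrite (_ : 3 * (iz + 1) = (iz + 1) + (iz + 1) + (iz + 1)); last by ring.
rewrite (_ : 2 * (iz + 1) = (iz + 1) + (iz + 1)); last by ring.
rewrite (_ : - (t - iz - 2) = - t + iz + 1 + 1); last by ring.
rewrite (_ : - (t - 1) = - t + 1); last by ring.
rewrite !qzD qz1 qzn.
by congr (_ / _); ring.
Qed.

Lemma alg_pair (F : fieldType) (q a b w P Q R : F) : q != 0 -> a != 0 -> P != 0 -> Q != 0 -> R != 0 ->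
  1 - q * a != 0 -> 1 - q * b != 0 -> 1 - q * (a * b) != 0 ->
  w / (R * (1 - q * (a * b)) / (P * (Q * (1 - q * b)))) + q * (a * b) * (w / a) / (R * (1 - q * (a * b)) / (P * (1 - q * a) * Q))
  = (1 - q * (q * (a * b))) / (1 - q * (a * b)) * (w / (R / (P * Q))).
Proof. move=> h1 h2 h3 h4 h5 h6 h7 h8; field; by rewrite ?h1 ?h2 ?h3 ?h4 ?h5 ?h6 ?h7 ?h8. Qed.

Lemma pair_id k m :
  W k / qbinom qx (k + m).+1 k + qx ^+ (k + m).+1 * W k.+1 / qbinom qx (k + m).+1 k.+1
  = (1 - qx ^+ (k + m).+2) / (1 - qx ^+ (k + m).+1) * (W k / qbinom qx (k + m) k).
Proof.
rewrite /qbinom subSS addKn -addnS addKn addnS.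
rewrite !qpochS WS.
have h1 := qpoch_qq_neq0 k; have h2 := qpoch_qq_neq0 m; have h3 := qpoch_qq_neq0 (k + m).
have h4 := qx_neq0.
have h5 : 1 - qx ^+ (k + m).+1 != 0 by apply: oneB_neq0.
have h6 : 1 - qx * qx ^+ k != 0 by rewrite -exprS; apply: oneB_neq0.
have h7 : 1 - qx * qx ^+ m != 0 by rewrite -exprS; apply: oneB_neq0.
have h8 : 1 - qx * qx ^+ (k + m) != 0 by rewrite -exprS; apply: oneB_neq0.
rewrite !exprS exprD.
move: h5 h8; rewrite exprS exprD => h5 h8.
set a := qx ^+ k in h1 h6 *; set b := qx ^+ m in h2 h7 h5 h8 *.
have ha : qx ^+ k != 0 := expf_neq0 k h4.
exact: (@alg_pair _ qx a b (W k) (qpoch qx qx k) (qpoch qx qx m) (qpoch qx qx (k+m)) h4 ha h1 h2 h3 h6 h7 h5).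
Qed.

Definition S n := \sum_(k < n) W k / qbinom qx n k.

Lemma qbinom_n0 n : qbinom qx n 0 = 1.
Proof. by rewrite /qbinom subn0 qpoch0 mul1r divff // qpoch_qq_neq0. Qed.

Lemma qbinom_nn n : qbinom qx n n = 1.
Proof. by rewrite /qbinom subnn qpoch0 mulr1 divff // qpoch_qq_neq0. Qed.

Lemma S_rec n : (1 + qx ^+ n.+1) * S n.+1 + qx ^+ n.+1 * (W n.+1 - 1)
  = (1 - qx ^+ n.+2) / (1 - qx ^+ n.+1) * (S n + W n).
Proof.
have E : \sum_(k < n.+1) (W k / qbinom qx n.+1 k + qx ^+ n.+1 * W k.+1 / qbinom qx n.+1 k.+1)
   = \sum_(k < n.+1) (1 - qx ^+ n.+2) / (1 - qx ^+ n.+1) * (W k / qbinom qx n k).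
  apply: eq_bigr => -[k hk0] _ /=.
  have hk : (k <= n)%N by rewrite -ltnS.
  clear hk0; rewrite -(subnKC hk); exact: pair_id.
have -> : S n + W n = \sum_(k < n.+1) W k / qbinom qx n k.
  by rewrite big_ord_recr /= qbinom_nn divr1.
rewrite [RHS]mulr_sumr -E big_split /=.
have -> : \sum_(k < n.+1) qx ^+ n.+1 * W k.+1 / qbinom qx n.+1 k.+1
    = qx ^+ n.+1 * \sum_(k < n.+1) W k.+1 / qbinom qx n.+1 k.+1.
  by rewrite mulr_sumr; apply: eq_bigr => k _; rewrite mulrA.
set f := fun j : nat => W j / qbinom qx n.+1 j.
have H1 : \sum_(k < n.+2) f k = f 0%N + \sum_(k < n.+1) f k.+1 by rewrite big_ord_recl.
have H2 : \sum_(k < n.+2) f k = S n.+1 + f n.+1 by rewrite big_ord_recr.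
have -> : \sum_(k < n.+1) W k.+1 / qbinom qx n.+1 k.+1 = S n.+1 + f n.+1 - f 0%N.
  by rewrite -H2 H1 addrC addKr.
rewrite /f qbinom_n0 qbinom_nn W0 !divr1.
rewrite /S; ring.
Qed.

Definition T n := \sum_(i < n) Cf i * qpoch (qx ^+ 2) (qx ^+ 2) i
                   / (qpoch (qx ^+ 2) qx i * (qx ^+ (i + 2) - 1)).

Lemma alg_main {F : fieldType} (q x y A B s t : F) : q != 0 -> x != 0 -> A != 0 -> B != 0 ->
  1 + q * x != 0 -> 1 - q * x != 0 -> 1 - q * (q * x) != 0 -> 1 - q ^+ 2 * x ^+ 2 != 0 ->
  (1 + q * x) * s + q * x * (y / x - 1) = (1 - q * (q * x)) / (1 - q * x) * (A / B * t + y) ->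
  s = A * (1 - q ^+ 2 * x) / (B * (1 - q ^+ 2 * x ^+ 2)) *
  (t + (q * x + q ^+ 3 * x ^+ 3 + y + y * x * q ^+ 2 - y * x * q - y * q - 2 * q ^+ 2 * x ^+ 2) / (q * x - 1) * B / (A * (x * q ^+ 2 - 1))).
Proof.
move=> h1 h2 h3 h4 h5 h6 h7 h8 h.
have h9 : q * x - 1 != 0 by rewrite -opprB oppr_eq0.
have h10 : x * q ^+ 2 - 1 != 0 by rewrite -opprB oppr_eq0 mulrC expr2 -mulrA.
have h11 : 1 - q ^+ 2 * x != 0 by rewrite expr2 -mulrA.
have hs : s = ((1 - q * (q * x)) / (1 - q * x) * (A / B * t + y) - q * x * (y / x - 1)) / (1 + q * x).
  rewrite -h; field; by rewrite ?h1 ?h2 ?h3 ?h4 ?h5 ?h6 ?h7 ?h8 ?h9 ?h10 ?h11.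
have h12 : 1 - (q * x) ^+ 2 != 0 by rewrite exprMn.
rewrite hs; field; by rewrite ?h1 ?h2 ?h3 ?h4 ?h5 ?h6 ?h7 ?h8 ?h9 ?h10 ?h11 ?h12.
Qed.

Lemma main n : S n = qpoch (qx ^+ 2) qx n / qpoch (qx ^+ 2) (qx ^+ 2) n * T n.
Proof.
elim: n => [|n IH]; first by rewrite /S /T !big_ord0 mulr0.
have HS := S_rec n.
rewrite IH WS in HS.
rewrite /T big_ord_recr /= -/(T n) !qpochS Cf_eq.
move: (qpoch_q2q_neq0 n) (qpoch_q2q2_neq0 n) HS.
generalize (qpoch (qx ^+ 2) qx n) (qpoch (qx ^+ 2) (qx ^+ 2) n) => A B hA hB HS.
rewrite -(exprM qx 2 n) mulnC (exprM qx n 2) (exprD qx n 2).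
rewrite !(exprS qx n.+1) !(exprS qx n) in HS *.
have hx : qx ^+ n != 0 := expf_neq0 n qx_neq0.
have h5 : 1 + qx * qx ^+ n != 0 by rewrite -exprS; apply: oneD_neq0.
have h6 : 1 - qx * qx ^+ n != 0 by rewrite -exprS; apply: oneB_neq0.
have h7 : 1 - qx * (qx * qx ^+ n) != 0 by rewrite -!exprS; apply: oneB_neq0.
have h8 : 1 - qx ^+ 2 * (qx ^+ n) ^+ 2 != 0 by rewrite -exprM -exprD; apply: oneB_neq0.
exact: (alg_main _ _ _ _ _ _ _ qx_neq0 hx hA hB h5 h6 h7 h8 HS).
Qed.

Theorem theorem2 (n : nat) : (0 < n)%N ->
  \sum_(k < n) qz (- (((k%:Z) * (k%:Z - 1)) %/ 2)%Z) / qbinom qx n k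
  = qpoch (qx ^+ 2) qx n / qpoch (qx ^+ 2) (qx ^+ 2) n
    * \sum_(i < n) Cf i * qpoch (qx ^+ 2) (qx ^+ 2) i
                   / (qpoch (qx ^+ 2) qx i * (qx ^+ (i + 2) - 1)).
Proof. move=> _; exact: main. Qed.
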